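(* Let $g\ge1$ and $n\ge 3$. In $B_n(\Sigma_g)/\Gamma_3(B_n(\Sigma_g))$ all the classes of $\sigma_1,\dots,\sigma_{n-1}$ coincide; call this class $\sigma$, and denote the classes of $a_i,b_i$ again by $a_i,b_i$. Then $B_n(\Sigma_g)/\Gamma_3(B_n(\Sigma_g))$ is isomorphic to a semidirect product $(\mathbb{Z}\times\mathbb{Z}^g)\rtimes\mathbb{Z}^g$, where the first factor $\mathbb{Z}$ is central and generated by $\sigma$, the factor $\mathbb{Z}^g$ is (freely abelian) generated by $a_1,\dots,a_g$, and the acting factor $\mathbb{Z}^g$ is generated by $b_1,\dots,b_g$, the action being given by $b_j a_l b_j^{-1}=a_l$ for $l\neq j$ and $b_j a_j b_j^{-1}=\sigma^{-2}a_j$ (and $b_j\sigma b_j^{-1}=\sigma$). In particular it is a central extension of $\mathbb{Z}^{2g}$ by $\mathbb{Z}$, and every element can be written uniquely as $\sigma^p\prod_{i=1}^g a_i^{m_i}\prod_{i=1}^g b_i^{n_i}$ with $p,m_i,n_i\in\mathbb{Z}$.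
   Context: $\Sigma_g$ is a compact connected orientable surface of genus $g\ge1$ with one boundary component; $B_n(\Sigma_g)=\pi_1(F_n(\Sigma_g)/S_n)$ where $F_n(\Sigma_g)$ is the space of ordered $n$-tuples of distinct points. $\Gamma_1(G)=G$, $\Gamma_i(G)=[G,\Gamma_{i-1}(G)]$. $B_n(\Sigma_g)$ has the presentation with generators $\sigma_1,\dots,\sigma_{n-1},a_1,b_1,\dots,a_g,b_g$ and relations: $\sigma_i\sigma_j=\sigma_j\sigma_i$ for $|i-j|\ge2$; $\sigma_i\sigma_{i+1}\sigma_i=\sigma_{i+1}\sigma_i\sigma_{i+1}$ for $1\le i\le n-2$; $c\,\sigma_j=\sigma_j c$ for $c\in\{a_i,b_i\}$, $j\ge2$; $c\sigma_1c\sigma_1=\sigma_1c\sigma_1c$ for $c\in\{a_i,b_i\}$; $a_i\sigma_1b_i=\sigma_1b_i\sigma_1a_i\sigma_1$; $c_i(\sigma_1^{-1}c_j\sigma_1)=(\sigma_1^{-1}c_j\sigma_1)c_i$ for $c_i\in\{a_i,b_i\}$, $c_j\in\{a_j,b_j\}$, $1\le j<i\le g$. *)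

(* Defs.v *)
From HB Require Import structures.
From mathcomp Require Import all_boot all_order all_algebra.
Set Implicit Arguments. Unset Strict Implicit. Unset Printing Implicit Defensive.
Import Order.TTheory GRing.Theory Num.Theory.

(* Generators of B_n(Sigma_g), 0-based indices:                         *)
(*   Sig i  (i : 'I_n.-1)  is  sigma_{i+1}                               *)
(*   A k, B k (k : 'I_g)   are a_{k+1}, b_{k+1}                           *)
(* A letter is a generator together with an exponent sign              *)
(* (false = +1, true = -1); words are elements of the free monoid on    *)
(* letters, i.e. (unreduced) words in the free group on the generators. *)
Inductive gen (n g : nat) : Type :=
| Sig of 'I_n.-1
| A of 'I_g
| B of 'I_g.

Definition letter (n g : nat) : Type := (gen n g * bool)%type.
Definition word (n g : nat) : Type := seq (letter n g).

Definition pos n g (x : gen n g) : letter n g := (x, false).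
Definition neg n g (x : gen n g) : letter n g := (x, true).

Definition winv n g (w : word n g) : word n g :=
  rev (map (fun l : letter n g => (l.1, ~~ l.2)) w).

Definition wcomm n g (u v : word n g) : word n g :=
  winv u ++ winv v ++ u ++ v.

Inductive braid_rel (n g : nat) : word n g -> word n g -> Prop :=
| R_far (i j : 'I_n.-1) : ((i:nat).+2 <= j)%N \/ ((j:nat).+2 <= i)%N ->
    braid_rel [:: pos (Sig g i); pos (Sig g j)] [:: pos (Sig g j); pos (Sig g i)]
| R_braid (i j : 'I_n.-1) : (j:nat) = i.+1 ->
    braid_rel [:: pos (Sig g i); pos (Sig g j); pos (Sig g i)]
              [:: pos (Sig g j); pos (Sig g i); pos (Sig g j)]
| R_commA (k : 'I_g) (j : 'I_n.-1) : (1 <= j)%N ->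
    braid_rel [:: pos (A n k); pos (Sig g j)] [:: pos (Sig g j); pos (A n k)]
| R_commB (k : 'I_g) (j : 'I_n.-1) : (1 <= j)%N ->
    braid_rel [:: pos (B n k); pos (Sig g j)] [:: pos (Sig g j); pos (B n k)]
| R_csc (c : gen n g) (s1 : 'I_n.-1) : (s1:nat) = 0%N ->
    (exists k, c = A n k \/ c = B n k) ->
    braid_rel [:: pos c; pos (Sig g s1); pos c; pos (Sig g s1)]
              [:: pos (Sig g s1); pos c; pos (Sig g s1); pos c]
| R_ab (k : 'I_g) (s1 : 'I_n.-1) : (s1:nat) = 0%N ->
    braid_rel [:: pos (A n k); pos (Sig g s1); pos (B n k)]
              [:: pos (Sig g s1); pos (B n k); pos (Sig g s1); pos (A n k); pos (Sig g s1)]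
| R_cc (ci cj : gen n g) (i j : 'I_g) (s1 : 'I_n.-1) : (s1:nat) = 0%N ->
    (j < i)%N -> (ci = A n i \/ ci = B n i) -> (cj = A n j \/ cj = B n j) ->
    braid_rel [:: pos ci; neg (Sig g s1); pos cj; pos (Sig g s1)]
              [:: neg (Sig g s1); pos cj; pos (Sig g s1); pos ci].

(* The congruence on words whose quotient is B_n(Sigma_g)/Gamma_3:
   free cancellation, the braid relations, and triviality of all
   [[u,v],w] (these normally generate Gamma_3 of the free group). *)
Inductive weq (n g : nat) : word n g -> word n g -> Prop :=
| weq_refl u : weq u u
| weq_sym u v : weq u v -> weq v u
| weq_trans u v w : weq u v -> weq v w -> weq u w
| weq_cat u u' v v' : weq u u' -> weq v v' -> weq (u ++ v) (u' ++ v')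
| weq_cancel (x : gen n g) (b : bool) : weq [:: (x, b); (x, ~~ b)] [::]
| weq_rel u v : braid_rel u v -> weq u v
| weq_gamma3 u v w : weq (wcomm (wcomm u v) w) [::].

(* The semidirect product (Z x Z^g) x| Z^g.  An element (p, m, k)       *)
(* stands for sigma^p prod_i a_i^(m i) prod_i b_i^(k i); the action     *)
(* b_j a_j b_j^-1 = sigma^-2 a_j, b_j a_l b_j^-1 = a_l (l <> j),        *)
(* sigma central, gives the multiplication below.                       *)
Definition SD (g : nat) : Type := (int * {ffun 'I_g -> int} * {ffun 'I_g -> int})%type.

Definition sd_one g : SD g := (0%R, [ffun => 0%R], [ffun => 0%R]).

Definition sd_mul g (x y : SD g) : SD g :=
  let: (p, m, k) := x in let: (p', m', k') := y in
  ((p + p' - 2 * \sum_(i < g) k i * m' i)%R,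
   [ffun i => (m i + m' i)%R], [ffun i => (k i + k' i)%R]).

Definition sd_inv g (x : SD g) : SD g :=
  let: (p, m, k) := x in
  ((- p - 2 * \sum_(i < g) k i * m i)%R, [ffun i => (- m i)%R], [ffun i => (- k i)%R]).

Definition sd_sigma g : SD g := (1%R, [ffun => 0%R], [ffun => 0%R]).
Definition sd_a g (j : 'I_g) : SD g := (0%R, [ffun i => Posz (i == j : nat)], [ffun => 0%R]).
Definition sd_b g (j : 'I_g) : SD g := (0%R, [ffun => 0%R], [ffun i => Posz (i == j : nat)]).

Definition sd_gen n g (x : gen n g) : SD g :=
  match x with Sig _ => sd_sigma g | A j => sd_a j | B j => sd_b j end.

Definition sd_letter n g (l : letter n g) : SD g :=
  if l.2 then sd_inv (sd_gen l.1) else sd_gen l.1.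

Definition sd_eval n g (w : word n g) : SD g :=
  foldr (fun l acc => sd_mul (sd_letter l) acc) (sd_one g) w.

(* Main.v *)
Require Import Defs.
From HB Require Import structures.
From mathcomp Require Import all_boot all_order all_algebra.
From mathcomp Require Import ring lra zify.
From Stdlib Require Import Setoid Morphisms.
Set Implicit Arguments. Unset Strict Implicit. Unset Printing Implicit Defensive.
Import Order.TTheory GRing.Theory Num.Theory.
Local Open Scope ring_scope.

Lemma sd_ext g (p p' : int) (m m' k k' : {ffun 'I_g -> int}) :
  p = p' -> (forall i, m i = m' i) -> (forall i, k i = k' i) ->
  ((p, m, k) : SD g) = (p', m', k').
Proof. by move=> -> /ffunP -> /ffunP ->. Qed.

Lemma sd_mul_assoc g (x y z : SD g) : sd_mul x (sd_mul y z) = sd_mul (sd_mul x y) z.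
Proof.
case: x => [[p m] k]; case: y => [[p' m'] k']; case: z => [[p'' m''] k''] /=.
apply: sd_ext => [|i|i]; rewrite ?ffunE ?addrA //.
have -> : \sum_(i < g) k i * [ffun i => m' i + m'' i] i = \sum_i k i * m' i + \sum_i k i * m'' i.
  by rewrite -big_split; apply: eq_bigr => i _; rewrite ffunE mulrDr.
have -> : \sum_(i < g) [ffun i => k i + k' i] i * m'' i = \sum_i k i * m'' i + \sum_i k' i * m'' i.
  by rewrite -big_split; apply: eq_bigr => i _; rewrite ffunE mulrDl.
ring.
Qed.

Lemma sd_mul1 g (x : SD g) : sd_mul (sd_one g) x = x.
Proof.
case: x => [[p m] k] /=; apply: sd_ext => [|i|i]; rewrite ?ffunE ?add0r //.
by rewrite big1 ?mulr0 ?subr0 // => i _; rewrite ffunE mul0r.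
Qed.

Lemma sd_mulr1 g (x : SD g) : sd_mul x (sd_one g) = x.
Proof.
case: x => [[p m] k] /=; apply: sd_ext => [|i|i]; rewrite ?ffunE ?addr0 //.
by rewrite big1 ?mulr0 ?subr0 // => i _; rewrite ffunE mulr0.
Qed.

Lemma sd_mulV g (x : SD g) : sd_mul (sd_inv x) x = sd_one g.
Proof.
case: x => [[p m] k] /=; apply: sd_ext => [|i|i]; rewrite ?ffunE ?addNr //.
have -> : \sum_(i < g) [ffun i => - k i] i * m i = - \sum_i k i * m i.
  by rewrite -sumrN; apply: eq_bigr => i _; rewrite ffunE mulNr.
ring.
Qed.

Lemma sd_mulrV g (x : SD g) : sd_mul x (sd_inv x) = sd_one g.
Proof.
case: x => [[p m] k] /=; apply: sd_ext => [|i|i]; rewrite ?ffunE ?addrN //.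
have -> : \sum_(i < g) k i * [ffun i => - m i] i = - \sum_i k i * m i.
  by rewrite -sumrN; apply: eq_bigr => i _; rewrite ffunE mulrN.
ring.
Qed.

Lemma sd_canl g (a x y : SD g) : sd_mul a x = sd_mul a y -> x = y.
Proof.
move=> h; by rewrite -(sd_mul1 x) -(sd_mulV a) -sd_mul_assoc h sd_mul_assoc sd_mulV sd_mul1.
Qed.

Lemma sd_invK g (x : SD g) : sd_inv (sd_inv x) = x.
Proof. by apply: (@sd_canl _ (sd_inv x)); rewrite sd_mulrV sd_mulV. Qed.

Lemma sd_invM g (x y : SD g) : sd_inv (sd_mul x y) = sd_mul (sd_inv y) (sd_inv x).
Proof.
apply: (@sd_canl _ (sd_mul x y)); rewrite sd_mulrV.
by rewrite -sd_mul_assoc [sd_mul y _]sd_mul_assoc sd_mulrV sd_mul1 sd_mulrV.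
Qed.

Lemma sd_eval_cat n g (u v : word n g) : sd_eval (u ++ v) = sd_mul (sd_eval u) (sd_eval v).
Proof.
elim: u => [|l u IH]; first by rewrite cat0s -[sd_eval [::]]/(sd_one g) sd_mul1.
by rewrite cat_cons /= IH sd_mul_assoc. Qed.

Lemma winv_cons n g (l : letter n g) u : winv (l :: u) = winv u ++ [:: (l.1, ~~ l.2)].
Proof. by rewrite /winv /= rev_cons -cats1. Qed.

Lemma winv_cat n g (u v : word n g) : winv (u ++ v) = winv v ++ winv u.
Proof. by rewrite /winv map_cat rev_cat. Qed.

Lemma winvK n g (u : word n g) : winv (winv u) = u.
Proof.
rewrite /winv map_rev revK -map_comp.
elim: u => [|[x b] u IH] //=; by rewrite negbK IH.
Qed.

Lemma sd_letter_neg n g (x : gen n g) b : sd_letter (x, ~~ b) = sd_inv (sd_letter (x, b)).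
Proof. by case: b; rewrite /sd_letter /= ?sd_invK. Qed.

Lemma sd_eval_inv n g (u : word n g) : sd_eval (winv u) = sd_inv (sd_eval u).
Proof.
elim: u => [|[x b] u IH].
  by rewrite /= -{1}(sd_mulV (sd_one g)) sd_mulr1.
rewrite winv_cons sd_eval_cat IH /= sd_mulr1 sd_letter_neg sd_invM //.
Qed.

Definition cent g (x : SD g) := (forall i, x.1.2 i = 0) /\ (forall i, x.2 i = 0).

Lemma cent_comm g (x y : SD g) : cent x -> sd_mul x y = sd_mul y x.
Proof.
case: x => [[p m] k] [/= hm hk]; case: y => [[p' m'] k'] /=.
apply: sd_ext => [|i|i]; rewrite ?ffunE; last 2 first.
- by rewrite addrC.
- by rewrite addrC.
have e1: \sum_(i<g) k i * m' i = 0 by apply: big1 => i _; rewrite hk mul0r.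
have e2: \sum_(i<g) k' i * m i = 0 by apply: big1 => i _; rewrite hm mulr0.
rewrite e1 e2; ring.
Qed.

Lemma sd_m_mul g (x y : SD g) i : (sd_mul x y).1.2 i = x.1.2 i + y.1.2 i.
Proof. by case: x => [[p m] k]; case: y => [[p' m'] k'] /=; rewrite ffunE. Qed.
Lemma sd_k_mul g (x y : SD g) i : (sd_mul x y).2 i = x.2 i + y.2 i.
Proof. by case: x => [[p m] k]; case: y => [[p' m'] k'] /=; rewrite ffunE. Qed.
Lemma sd_m_inv g (x : SD g) i : (sd_inv x).1.2 i = - x.1.2 i.
Proof. by case: x => [[p m] k] /=; rewrite ffunE. Qed.
Lemma sd_k_inv g (x : SD g) i : (sd_inv x).2 i = - x.2 i.
Proof. by case: x => [[p m] k] /=; rewrite ffunE. Qed.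

Lemma sd_comm_cent g (x y : SD g) :
  cent (sd_mul (sd_inv x) (sd_mul (sd_inv y) (sd_mul x y))).
Proof.
split=> i; rewrite ?sd_m_mul ?sd_m_inv ?sd_k_mul ?sd_k_inv; ring.
Qed.

Lemma sd_eval_comm n g (u v : word n g) :
  sd_eval (wcomm u v) =
  sd_mul (sd_inv (sd_eval u)) (sd_mul (sd_inv (sd_eval v)) (sd_mul (sd_eval u) (sd_eval v))).
Proof. by rewrite /wcomm !sd_eval_cat !sd_eval_inv. Qed.

Lemma sd_gamma3 n g (u v w : word n g) : sd_eval (wcomm (wcomm u v) w) = sd_one g.
Proof.
rewrite sd_eval_comm.
have cc : cent (sd_eval (wcomm u v)) by rewrite sd_eval_comm; apply: sd_comm_cent.
rewrite (cent_comm _ cc) [sd_mul (sd_inv (sd_eval w)) _]sd_mul_assoc sd_mulV sd_mul1 sd_mulV //.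
Qed.

Arguments sd_mul : simpl never.
Arguments sd_inv : simpl never.
Arguments sd_a : simpl never.
Arguments sd_b : simpl never.
Arguments sd_sigma : simpl never.
Arguments sd_one : simpl never.

Lemma sum_ind g (j : 'I_g) (f : 'I_g -> int) :
  \sum_(i < g) Posz (i == j : nat) * f i = f j.
Proof.
rewrite (bigD1 j) //= eqxx mul1r big1 ?addr0 // => i /negbTE ->; by rewrite mul0r.
Qed.

Lemma sd_one_E g : sd_one g = (0, [ffun => 0], [ffun => 0]).
Proof. by []. Qed.

Lemma ev_S g (x : SD g) : sd_mul (sd_sigma g) x = (1 + x.1.1, x.1.2, x.2).
Proof.
case: x => [[p m] k] /=.
rewrite /sd_mul /sd_sigma; apply: sd_ext => [|i|i]; rewrite ?ffunE ?add0r //.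
by rewrite big1 ?mulr0 ?subr0 // => i _; rewrite ffunE mul0r.
Qed.

Lemma ev_Si g (x : SD g) : sd_mul (sd_inv (sd_sigma g)) x = (x.1.1 - 1, x.1.2, x.2).
Proof.
case: x => [[p m] k] /=.
rewrite /sd_mul /sd_inv /sd_sigma; apply: sd_ext => [|i|i]; rewrite ?ffunE ?oppr0 ?add0r //.
have e1 : \sum_(i < g) ([ffun => 0] : {ffun 'I_g -> int}) i * ([ffun => 0] : {ffun 'I_g -> int}) i = 0.
  by apply: big1 => i _; rewrite ffunE mul0r.
have e2 : \sum_(i < g) ([ffun i => - ([ffun => 0] : {ffun 'I_g -> int}) i] : {ffun 'I_g -> int}) i * m i = 0.
  by apply: big1 => i _; rewrite !ffunE oppr0 mul0r.
rewrite e1 e2; ring.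
Qed.

Lemma ev_A g j (x : SD g) :
  sd_mul (sd_a j) x = (x.1.1, [ffun i => Posz (i == j : nat) + x.1.2 i], x.2).
Proof.
case: x => [[p m] k] /=.
rewrite /sd_mul /sd_a; apply: sd_ext => [|i|i]; rewrite ?ffunE ?add0r //.
by rewrite big1 ?mulr0 ?subr0 // => i _; rewrite ffunE mul0r.
Qed.

Lemma ev_Ai g j (x : SD g) :
  sd_mul (sd_inv (sd_a j)) x = (x.1.1, [ffun i => x.1.2 i - Posz (i == j : nat)], x.2).
Proof.
case: x => [[p m] k] /=.
rewrite /sd_mul /sd_inv /sd_a; apply: sd_ext => [|i|i]; rewrite ?ffunE ?oppr0 ?add0r.
- rewrite !big1 ?mulr0 ?subr0 ?oppr0 ?add0r // => i _; by rewrite !ffunE ?oppr0 mul0r.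
- by rewrite addrC.
- by [].
Qed.

Lemma ev_B g j (x : SD g) :
  sd_mul (sd_b j) x = (x.1.1 - 2 * x.1.2 j, x.1.2, [ffun i => Posz (i == j : nat) + x.2 i]).
Proof.
case: x => [[p m] k] /=.
rewrite /sd_mul /sd_b; apply: sd_ext => [|i|i]; rewrite ?ffunE ?add0r //.
congr (_ - 2 * _); rewrite -(sum_ind j m); apply: eq_bigr => i _; by rewrite ffunE.
Qed.

Lemma ev_Bi g j (x : SD g) :
  sd_mul (sd_inv (sd_b j)) x = (x.1.1 + 2 * x.1.2 j, x.1.2, [ffun i => x.2 i - Posz (i == j : nat)]).
Proof.
case: x => [[p m] k] /=.
rewrite /sd_mul /sd_inv /sd_b; apply: sd_ext => [|i|i]; rewrite ?ffunE ?oppr0 ?add0r.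
- have -> : \sum_(i < g) ([ffun i0 => - ([ffun i1 => Posz (i1 == j : nat)] : {ffun 'I_g -> int}) i0] : {ffun 'I_g -> int}) i * m i = - m j.
    rewrite -(sum_ind j m) -sumrN; apply: eq_bigr => i _; by rewrite !ffunE mulNr.
  have -> : \sum_(i < g) ([ffun i1 => Posz (i1 == j : nat)] : {ffun 'I_g -> int}) i * ([ffun => 0] : {ffun 'I_g -> int}) i = 0.
    by apply: big1 => i _; rewrite !ffunE mulr0.
  ring.
- by [].
- by rewrite addrC.
Qed.

Lemma PoszF0 : Posz (false : nat) = 0. Proof. by []. Qed.

Opaque sd_mul sd_inv sd_a sd_b sd_sigma.

Ltac sdsolve :=
  rewrite /= /sd_letter /= ?sd_one_E;
  rewrite ?(ev_S, ev_Si, ev_A, ev_Ai, ev_B, ev_Bi) /=;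
  apply: sd_ext => [|?|?]; rewrite ?ffunE ?eqxx /=.

Lemma sd_rel n g (u v : word n g) : braid_rel u v -> sd_eval u = sd_eval v.
Proof.
case=> {u v}.
- move=> i j _; by [].
- move=> i j _; by [].
- move=> k j _; sdsolve; ring.
- move=> k j _; sdsolve; ring.
- move=> c s1 _ [k [->|->]]; sdsolve; ring.
- move=> k s1 _; sdsolve; ring.
- move=> ci cj i j s1 _ lt [->|->] [->|->];
  have ne : (i == j) = false by apply/eqP => e; move: lt; rewrite e ltnn.
  all: have ne' : (j == i) = false by rewrite eq_sym.
  all: sdsolve; rewrite ?ne ?ne' ?PoszF0; ring.
Qed.

Lemma sd_weq n g (u v : word n g) : weq u v -> sd_eval u = sd_eval v.
Proof.
elim=> {u v}.
- by [].
- by move=> u v _ ->.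
- by move=> u v w _ -> _ ->.
- by move=> u u' v v' _ e1 _ e2; rewrite !sd_eval_cat e1 e2.
- move=> x b. rewrite /= sd_letter_neg sd_mulr1 sd_mulrV //.
- by move=> u v /sd_rel.
- by move=> u v w; rewrite sd_gamma3.
Qed.

Notation "u =w v" := (weq u v) (at level 70).

#[export] Instance weq_Equiv n g : Equivalence (@weq n g).
Proof. split; [exact: weq_refl | exact: weq_sym | exact: weq_trans]. Qed.

#[export] Instance cat_Proper n g : Proper (@weq n g ==> @weq n g ==> @weq n g) (@cat (letter n g)).
Proof. move=> u u' hu v v' hv; exact: weq_cat. Qed.

#[export] Hint Resolve weq_refl : core.

Lemma inv_r n g (u : word n g) : u ++ winv u =w [::].
Proof.
elim: u => [|[x b] u IH]; first exact: weq_refl.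
rewrite winv_cons.
have -> : ((x, b) :: u) ++ winv u ++ [:: (x, ~~ b)] = [:: (x,b)] ++ (u ++ winv u) ++ [:: (x, ~~ b)].
  by rewrite /= catA.
rewrite IH /=. exact: weq_cancel.
Qed.

Lemma inv_l n g (u : word n g) : winv u ++ u =w [::].
Proof. by rewrite -{2}(winvK u) inv_r. Qed.

Lemma canc_rl n g (u w : word n g) : u ++ (winv u ++ w) =w w.
Proof. by rewrite catA inv_r. Qed.
Lemma canc_lr n g (u w : word n g) : winv u ++ (u ++ w) =w w.
Proof. by rewrite catA inv_l. Qed.

Lemma canl n g (w u v : word n g) : w ++ u =w w ++ v -> u =w v.
Proof. by move=> h; rewrite -(canc_lr w u) h canc_lr. Qed.

Lemma canr n g (w u v : word n g) : u ++ w =w v ++ w -> u =w v.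
Proof.
move=> h; rewrite -(cats0 u) -(cats0 v) -(inv_r w) !catA h //.
Qed.

Lemma winv_weq n g (u v : word n g) : u =w v -> winv u =w winv v.
Proof.
move=> h; apply: (@canl _ _ u); rewrite inv_r h inv_r //.
Qed.

Definition wc n g (u v : word n g) := u ++ v =w v ++ u.
Definition central n g (u : word n g) := forall v, wc u v.

Lemma wc_sym n g (u v : word n g) : wc u v -> wc v u.
Proof. by rewrite /wc => ->. Qed.

Lemma wc_catr n g (u v w : word n g) : wc u v -> wc u w -> wc u (v ++ w).
Proof. by rewrite /wc => h1 h2; rewrite catA h1 -catA h2 catA. Qed.

Lemma wc_catl n g (u v w : word n g) : wc u w -> wc v w -> wc (u ++ v) w.
Proof. by move=> h1 h2; apply: wc_sym; apply: wc_catr; apply: wc_sym. Qed.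

Lemma wc_invr n g (u v : word n g) : wc u v -> wc u (winv v).
Proof.
rewrite /wc => h.
rewrite -{1}(canc_lr v (u ++ winv v)) (catA v u) -h -(catA u v) inv_r cats0 //.
Qed.

Lemma wc_invl n g (u v : word n g) : wc u v -> wc (winv u) v.
Proof. by move=> h; apply: wc_sym; apply: wc_invr; apply: wc_sym. Qed.

Lemma wc_nil n g (u : word n g) : wc u [::].
Proof. by rewrite /wc cats0. Qed.

Lemma central_comm n g (u v : word n g) : central (wcomm u v).
Proof.
move=> w; set c := wcomm u v.
apply: (@canl _ _ (winv c ++ winv w)).
have h := weq_gamma3 u v w; rewrite -/c /wcomm in h.
rewrite -catA h -catA canc_lr inv_l //.
Qed.

Lemma swap n g (x y : word n g) : x ++ y =w y ++ x ++ wcomm x y.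
Proof. by rewrite /wcomm canc_rl canc_rl. Qed.

Lemma sig_next n g (i j : 'I_n.-1) : (j : nat) = i.+1 ->
  [:: pos (Sig g i)] =w [:: pos (Sig g j)].
Proof.
move=> hij.
have hb : [:: pos (Sig g i)] ++ [:: pos (Sig g j)] ++ [:: pos (Sig g i)] =w
          [:: pos (Sig g j)] ++ [:: pos (Sig g i)] ++ [:: pos (Sig g j)].
  exact: weq_rel (R_braid _ hij).
move: hb; set X := [:: pos (Sig g i)]; set Y := [:: pos (Sig g j)] => hb.
have := central_comm X Y; have := swap X Y.
move: (wcomm X Y) => c sw cc.
have e1 : X ++ Y ++ X =w Y ++ X ++ X ++ c.
  rewrite catA sw -!catA (cc X) //.
have e2 : Y ++ X ++ Y =w Y ++ Y ++ X ++ c.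
  rewrite sw //.
have e3 : Y ++ (X ++ X ++ c) =w Y ++ (Y ++ X ++ c).
  by rewrite -e1 -e2.
move/canl: e3; rewrite !catA => /canr /canr //.
Qed.

Lemma sig_all n g (s0 : 'I_n.-1) (h0 : (s0 : nat) = 0%N) (i : 'I_n.-1) :
  [:: pos (Sig g i)] =w [:: pos (Sig g s0)].
Proof.
case: i => k hk; elim: k hk => [|k IH] hk.
  by have -> : Ordinal hk = s0 by apply: val_inj; rewrite /= h0.
have hk' : (k < n.-1)%N by apply: ltnW.
rewrite -(IH hk'); symmetry; exact: sig_next.
Qed.

Arguments sig_all {n g s0} h0 i.

#[export] Instance cons_Proper n g : Proper (eq ==> @weq n g ==> @weq n g) (@cons (letter n g)).
Proof. move=> l l' <- u v h; exact: (weq_cat (weq_refl [:: l]) h). Qed.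

Lemma swS n g (s : letter n g) : central [:: s] -> forall l w, l :: s :: w =w s :: l :: w.
Proof. move=> cs l w; exact: weq_sym (weq_cat (cs [:: l]) (weq_refl w)). Qed.

Lemma consl n g (l : letter n g) u v : l :: u =w l :: v -> u =w v.
Proof. move=> h; exact: (@canl _ _ [:: l]). Qed.

Lemma wc_SA n g (s0 s1 : 'I_n.-1) (h0 : (s0 : nat) = 0%N) (h1 : (s1 : nat) = 1%N) k :
  wc [:: pos (Sig g s0)] [:: pos (A n k)].
Proof.
apply: wc_sym; rewrite /wc -(sig_all h0 s1).
exact: weq_rel (@R_commA n g k s1 ltac:(by rewrite h1)).
Qed.

Lemma wc_SB n g (s0 s1 : 'I_n.-1) (h0 : (s0 : nat) = 0%N) (h1 : (s1 : nat) = 1%N) k :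
  wc [:: pos (Sig g s0)] [:: pos (B n k)].
Proof.
apply: wc_sym; rewrite /wc -(sig_all h0 s1).
exact: weq_rel (@R_commB n g k s1 ltac:(by rewrite h1)).
Qed.

Lemma central_S n g (s0 s1 : 'I_n.-1) (h0 : (s0 : nat) = 0%N) (h1 : (s1 : nat) = 1%N) :
  central [:: pos (Sig g s0)].
Proof.
move=> v; elim: v => [|l v IH]; first exact: wc_nil.
change (l :: v) with ([:: l] ++ v); apply: wc_catr => //.
have hp : forall x, wc [:: pos (Sig g s0)] [:: pos x].
  case=> [i|k|k].
  - by rewrite /wc (sig_all h0 i).
  - exact: wc_SA h0 h1 k.
  - exact: wc_SB h0 h1 k.
case: l => x [].
- change [:: (x, true)] with (winv [:: pos x]); apply: wc_invr; exact: hp.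
- exact: hp.
Qed.

Lemma central_inv n g (u : word n g) : central u -> central (winv u).
Proof. by move=> h v; apply: wc_invl. Qed.

Arguments wc_SA {n g s0 s1} h0 h1 k.
Arguments wc_SB {n g s0 s1} h0 h1 k.
Arguments central_S {n g s0 s1} h0 h1.

Lemma canc_np n g (x : gen n g) w : neg x :: pos x :: w =w w.
Proof. exact: (weq_cat (weq_cancel x true) (weq_refl w)). Qed.
Lemma canc_pn n g (x : gen n g) w : pos x :: neg x :: w =w w.
Proof. exact: (weq_cat (weq_cancel x false) (weq_refl w)). Qed.

Lemma cc_comm n g (s0 s1 : 'I_n.-1) (h0 : (s0 : nat) = 0%N) (h1 : (s1 : nat) = 1%N)
  (ci cj : gen n g) (i j : 'I_g) : (j < i)%N -> (ci = A n i \/ ci = B n i) ->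
  (cj = A n j \/ cj = B n j) -> wc [:: pos ci] [:: pos cj].
Proof.
move=> lt hi hj.
have h := weq_rel (R_cc h0 lt hi hj).
have cS := central_S (g:=g) h0 h1; have cN : central [:: neg (Sig g s0)] := central_inv cS.
have sS := swS cS; have sN := swS cN.
have L : [:: pos ci; neg (Sig g s0); pos cj; pos (Sig g s0)] =w [:: pos ci; pos cj].
  by rewrite -(sN (pos cj)) canc_np.
have R : [:: neg (Sig g s0); pos cj; pos (Sig g s0); pos ci] =w [:: pos cj; pos ci].
  by rewrite (sS (pos cj)) canc_np.
rewrite /wc /= -L -R; exact: h.
Qed.

Lemma ab_twist n g (s0 s1 : 'I_n.-1) (h0 : (s0 : nat) = 0%N) (h1 : (s1 : nat) = 1%N) (k : 'I_g) :
  [:: pos (A n k); pos (B n k)] =w [:: pos (Sig g s0); pos (Sig g s0); pos (B n k); pos (A n k)].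
Proof.
have h := weq_rel (R_ab k h0).
have cS := central_S (g:=g) h0 h1; have sS := swS cS.
rewrite (sS (pos (A n k))) in h; rewrite (sS (pos (A n k))) in h.
rewrite (sS (pos (B n k))) in h; rewrite (sS (pos (B n k))) in h.
exact: consl h.
Qed.

Lemma tw_flip n g (x y c : word n g) : central c -> x ++ y =w c ++ y ++ x ->
  y ++ x =w winv c ++ x ++ y.
Proof. by move=> cc h; rewrite h canc_lr. Qed.

Lemma tw_invl n g (x y c : word n g) : central c -> x ++ y =w c ++ y ++ x ->
  winv x ++ y =w winv c ++ y ++ winv x.
Proof.
move=> cc h; apply: (@canl _ _ x).
rewrite canc_rl catA -(central_inv cc x) -catA (catA x y) h.
rewrite -!catA canc_lr inv_r cats0 //.
Qed.

Definition pw n g (x : gen n g) (z : int) : word n g :=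
  match z with Posz k => nseq k (pos x) | Negz k => nseq k.+1 (neg x) end.

Lemma int_ind2 (P : int -> Prop) : P 0 -> (forall z, P z -> P (z + 1)) ->
  (forall z, P z -> P (z - 1)) -> forall z, P z.
Proof.
move=> P0 Ps Pp; elim/int_rect => // k h.
- have -> : (k.+1 : int) = (k : int) + 1 by rewrite -addn1 PoszD.
  exact: Ps.
- have -> : - (k.+1 : int) = - (k : int) - 1 by rewrite -addn1 PoszD opprD.
  exact: Pp.
Qed.

Lemma pw_succ n g (x : gen n g) z : pw x (z + 1) =w pos x :: pw x z.
Proof.
case: z => k.
- have -> : Posz k + 1 = Posz k.+1 by rewrite -addn1 PoszD.
  by [].
- case: k => [|k].
  + by rewrite /= canc_pn.
  + have -> : Negz k.+1 + 1 = Negz k by rewrite !NegzE; lia.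
    by rewrite /= canc_pn.
Qed.

Lemma pw_pred n g (x : gen n g) z : pw x (z - 1) =w neg x :: pw x z.
Proof.
case: z => k.
- case: k => [|k].
  + by [].
  + have -> : Posz k.+1 - 1 = Posz k by lia.
    by rewrite /= canc_np.
- have -> : Negz k - 1 = Negz k.+1 by rewrite !NegzE; lia.
  by [].
Qed.

Lemma pw_add n g (x : gen n g) z1 z2 : pw x (z1 + z2) =w pw x z1 ++ pw x z2.
Proof.
elim/int_ind2: z1 => [|z IH|z IH].
- by rewrite add0r.
- have -> : z + 1 + z2 = (z + z2) + 1 by ring.
  by rewrite !pw_succ IH.
- have -> : z - 1 + z2 = (z + z2) - 1 by ring.
  by rewrite !pw_pred IH.
Qed.

Lemma wc_nseq n g (u : word n g) l k : wc u [:: l] -> wc u (nseq k l).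
Proof.
move=> h; elim: k => [|k IH]; first exact: wc_nil.
change (nseq k.+1 l) with ([:: l] ++ nseq k l); exact: wc_catr.
Qed.

Lemma wc_pw n g (u : word n g) x z : wc u [:: pos x] -> wc u (pw x z).
Proof.
move=> h; case: z => k; apply: (@wc_nseq _ _ u) => //.
change [:: neg x] with (winv [:: pos x]); exact: wc_invr.
Qed.

Lemma wc_pw2 n g (x y : gen n g) z1 z2 : wc [:: pos x] [:: pos y] -> wc (pw x z1) (pw y z2).
Proof.
move=> h; apply: wc_pw; apply: wc_sym; apply: wc_pw; exact: wc_sym.
Qed.

Lemma central_pw n g (x : gen n g) z : central [:: pos x] -> central (pw x z).
Proof. move=> h v; apply: wc_sym; apply: wc_pw; apply: wc_sym; exact: h. Qed.

Definition blk n g (X : 'I_g -> gen n g) (m : 'I_g -> int) (s : seq 'I_g) : word n g :=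
  flatten [seq pw (X i) (m i) | i <- s].

Lemma blk_cons n g (X : 'I_g -> gen n g) m i s : blk X m (i :: s) = pw (X i) (m i) ++ blk X m s.
Proof. by []. Qed.

Lemma blk_eq_in n g (X : 'I_g -> gen n g) m m' s : {in s, forall i, m i = m' i} ->
  blk X m s = blk X m' s.
Proof. by move=> h; rewrite /blk; congr flatten; apply/eq_in_map => i /h ->. Qed.

Lemma PoszT : Posz (true : nat) = 1. Proof. by []. Qed.
Lemma PoszF : Posz (false : nat) = 0. Proof. by []. Qed.

Lemma blk_shift n g (X : 'I_g -> gen n g) (hX : forall i j, wc [:: pos (X i)] [:: pos (X j)])
  m s j d : uniq s -> j \in s ->
  pw (X j) d ++ blk X m s =w blk X (fun i => m i + Posz (i == j : nat) * d) s.
Proof.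
elim: s => [|i s IH] //= /andP[ni us]; rewrite in_cons => /orP[/eqP e | js].
- subst j; rewrite !blk_cons /= catA -pw_add eqxx PoszT mul1r addrC.
  rewrite (@blk_eq_in _ _ X (fun i0 => m i0 + _) m) //.
  move=> l ls; have -> : (l == i) = false by apply/eqP => e; move: ni; rewrite -e ls.
  by rewrite PoszF mul0r addr0.
- rewrite !blk_cons /=.
  have -> : (i == j) = false by apply/eqP => e; move: ni; rewrite e js.
  rewrite PoszF mul0r addr0 catA (wc_pw2 _ _ (hX j i)) -catA IH //.
Qed.

Lemma tw_pw n g (y : word n g) (sg x : gen n g) e : central [:: pos sg] ->
  y ++ [:: pos x] =w pw sg e ++ [:: pos x] ++ y ->
  y ++ [:: neg x] =w pw sg (- e) ++ [:: neg x] ++ y ->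
  forall z, y ++ pw x z =w pw sg (e * z) ++ pw x z ++ y.
Proof.
move=> cS h1 h2; elim/int_ind2 => [|z IH|z IH].
- by rewrite mulr0 /= cats0.
- rewrite pw_succ -cat1s catA h1 -!catA IH.
  rewrite (catA [:: pos x]) -(central_pw (e * z) cS [:: pos x]) -!catA.
  by rewrite catA -pw_add mulrDr mulr1 addrC.
- rewrite pw_pred -cat1s catA h2 -!catA IH.
  rewrite (catA [:: neg x]) -(central_pw (e * z) cS [:: neg x]) -!catA.
  by rewrite catA -pw_add mulrDr mulrN1 addrC.
Qed.

Lemma tw_blk n g (y : word n g) (sg : gen n g) (j : 'I_g) e : central [:: pos sg] ->
  (forall z, y ++ pw (A n j) z =w pw sg (e * z) ++ pw (A n j) z ++ y) ->
  (forall i z, i != j -> wc y (pw (A n i) z)) ->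
  forall m s, y ++ blk (@A n g) m s =w
     pw sg (e * \sum_(i <- s) Posz (i == j : nat) * m i) ++ blk (@A n g) m s ++ y.
Proof.
move=> cS hj hc m; elim=> [|i s IH].
- by rewrite big_nil mulr0 /= cats0.
- rewrite blk_cons big_cons catA; case: (eqVneq i j) => [->|ne].
  + rewrite hj -!catA IH PoszT mul1r.
    rewrite (catA (pw (A n j) (m j))) -(central_pw _ cS (pw (A n j) (m j))) -!catA.
    by rewrite catA -pw_add mulrDr.
  + rewrite (hc i (m i) ne) -catA IH.
    rewrite PoszF mul0r add0r.
    by rewrite !catA -(central_pw _ cS (pw (A n i) (m i))).
Qed.

Lemma wc_gen n g (s0 s1 : 'I_n.-1) (h0 : (s0 : nat) = 0%N) (h1 : (s1 : nat) = 1%N)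
  (ci cj : gen n g) (i j : 'I_g) : (ci = A n i \/ ci = B n i) ->
  (cj = A n j \/ cj = B n j) -> i != j -> wc [:: pos ci] [:: pos cj].
Proof.
move=> hi hj ne; case: (ltngtP i j) => c.
- apply: wc_sym; exact: (cc_comm h0 h1 c hj hi).
- exact: (cc_comm h0 h1 c hi hj).
- by move: ne; rewrite (val_inj c) eqxx.
Qed.

Lemma wcAA n g (s0 s1 : 'I_n.-1) (h0 : (s0 : nat) = 0%N) (h1 : (s1 : nat) = 1%N) (i j : 'I_g) :
  wc [:: pos (A n i)] [:: pos (A n j)].
Proof.
case: (eqVneq i j) => [->|ne]; first by rewrite /wc.
exact: (wc_gen h0 h1 (or_introl erefl) (or_introl erefl) ne).
Qed.

Lemma wcBB n g (s0 s1 : 'I_n.-1) (h0 : (s0 : nat) = 0%N) (h1 : (s1 : nat) = 1%N) (i j : 'I_g) :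
  wc [:: pos (B n i)] [:: pos (B n j)].
Proof.
case: (eqVneq i j) => [->|ne]; first by rewrite /wc.
exact: (wc_gen h0 h1 (or_intror erefl) (or_intror erefl) ne).
Qed.

Section Tw.
End Tw.

Lemma central_cat n g (u v : word n g) : central u -> central v -> central (u ++ v).
Proof. by move=> cu cv w; apply: wc_catl. Qed.

Lemma B_twists n g (s0 s1 : 'I_n.-1) (h0 : (s0 : nat) = 0%N) (h1 : (s1 : nat) = 1%N) (j : 'I_g) :
  let S := Sig g s0 in
  [/\ [:: pos (B n j)] ++ [:: pos (A n j)] =w pw S (-2) ++ [:: pos (A n j)] ++ [:: pos (B n j)],
      [:: pos (B n j)] ++ [:: neg (A n j)] =w pw S 2 ++ [:: neg (A n j)] ++ [:: pos (B n j)],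
      [:: neg (B n j)] ++ [:: pos (A n j)] =w pw S 2 ++ [:: pos (A n j)] ++ [:: neg (B n j)] &
      [:: neg (B n j)] ++ [:: neg (A n j)] =w pw S (-2) ++ [:: neg (A n j)] ++ [:: neg (B n j)]].
Proof.
move=> S.
have cS : central [:: pos S] := central_S h0 h1.
have cSS : central ([:: pos S] ++ [:: pos S]) := central_cat cS cS.
have cNN := central_inv cSS.
have base : [:: pos (A n j)] ++ [:: pos (B n j)] =w ([:: pos S] ++ [:: pos S]) ++ [:: pos (B n j)] ++ [:: pos (A n j)].
  exact: ab_twist h0 h1 j.
have F1 := tw_flip cSS base.
have G := tw_invl cSS base.
have F2 := tw_flip cNN G. rewrite winvK in F2.
have F3 := tw_invl cNN F1. rewrite winvK in F3.
have F4 := tw_invl cSS F2.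
split; [exact: F1 | exact: F2 | exact: F3 | exact: F4].
Qed.

Arguments sd_mul : simpl never.
Arguments sd_inv : simpl never.
Arguments sd_a : simpl never.
Arguments sd_b : simpl never.
Arguments sd_sigma : simpl never.
Arguments sd_one : simpl never.
Opaque sd_mul sd_inv sd_a sd_b sd_sigma.

Lemma B_blk n g (s0 s1 : 'I_n.-1) (h0 : (s0 : nat) = 0%N) (h1 : (s1 : nat) = 1%N) (j : 'I_g) b m s :
  [:: (B n j, b)] ++ blk (@A n g) m s =w
  pw (Sig g s0) ((if b then 2 else -2) * \sum_(i <- s) Posz (i == j : nat) * m i)
    ++ blk (@A n g) m s ++ [:: (B n j, b)].
Proof.
have cS : central [:: pos (Sig g s0)] := central_S h0 h1.
have [F1 F2 F3 F4] := B_twists h0 h1 j.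
have hc : forall i, i != j -> wc [:: pos (B n j)] [:: pos (A n i)].
  move=> i ne; apply: (wc_gen h0 h1 (or_intror (erefl (B n j))) (or_introl (erefl (A n i)))); by rewrite eq_sym.
apply: (tw_blk cS _ _ m s).
- case: b; apply: (tw_pw cS); by [].
- move=> i z ne; apply: wc_pw; case: b.
  + change [:: (B n j, true)] with (winv [:: pos (B n j)]); apply: wc_invl; exact: hc.
  + exact: hc.
Qed.

Definition nf n g (s0 : 'I_n.-1) (h : SD g) : word n g :=
  let: (p, m, k) := h in
  pw (Sig g s0) p ++ blk (@A n g) m (index_enum 'I_g) ++ blk (@B n g) k (index_enum 'I_g).

Lemma blk_ext n g (X : 'I_g -> gen n g) m m' s : (forall i, m i = m' i) -> blk X m s = blk X m' s.
Proof. by move=> h; apply: blk_eq_in => i _. Qed.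

Lemma eq_weq n g (u v : word n g) : u = v -> u =w v. Proof. by move=> ->. Qed.

Lemma pw1 n g (x : gen n g) : pw x 1 = [:: pos x]. Proof. by []. Qed.
Lemma pwN1 n g (x : gen n g) : pw x (-1) = [:: neg x]. Proof. by []. Qed.
Lemma pwb n g (x : gen n g) b : [:: (x, b)] = pw x (if b then -1 else 1). Proof. by case: b. Qed.

Lemma sum_ind' g (j : 'I_g) (f : 'I_g -> int) :
  \sum_(i <- index_enum 'I_g) Posz (i == j : nat) * f i = f j.
Proof. exact: sum_ind. Qed.

Lemma nf_step n g (s0 s1 : 'I_n.-1) (h0 : (s0 : nat) = 0%N) (h1 : (s1 : nat) = 1%N)
  (l : letter n g) (h : SD g) : [:: l] ++ nf s0 h =w nf s0 (sd_mul (sd_letter l) h).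
Proof.
have cS : central [:: pos (Sig g s0)] := central_S h0 h1.
case: h => [[p m] k]; case: l => [[i|j|j] b].
- have e : [:: (Sig g i, b)] =w pw (Sig g s0) (if b then -1 else 1).
    case: b; last exact: sig_all h0 i.
    exact: (winv_weq (sig_all h0 i)).
  rewrite /nf catA e -pw_add; clear e; case: b => /=; rewrite ?ev_S ?ev_Si /=.
  + by rewrite addrC.
  + by [].
- have cSp := central_pw p cS.
  rewrite /nf catA -(cSp [:: (A n j, b)]) -catA (catA [:: (A n j, b)]) pwb.
  rewrite (blk_shift (wcAA h0 h1)) ?index_enum_uniq ?mem_index_enum //.
  case: b => /=; rewrite ?ev_A ?ev_Ai /=;
  apply: weq_cat => //; apply: weq_cat => //; apply: eq_weq; apply: blk_ext => i;
  rewrite ffunE; case: (i == j); rewrite /= ?PoszT ?PoszF; ring.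
- have cSp := central_pw p cS.
  rewrite /nf catA -(cSp [:: (B n j, b)]) -catA (catA [:: (B n j, b)]).
  rewrite (B_blk h0 h1 j b m (index_enum 'I_g)) !catA -pw_add -!catA pwb.
  rewrite (blk_shift (wcBB h0 h1)) ?index_enum_uniq ?mem_index_enum //.
  case: b => /=; rewrite ?ev_B ?ev_Bi /=;
  (apply: weq_cat; [apply: eq_weq; congr pw; rewrite sum_ind'; ring|]);
  apply: weq_cat => //; apply: eq_weq; apply: blk_ext => i;
  rewrite ffunE; case: (i == j); rewrite /= ?PoszT ?PoszF; ring.
Qed.

Transparent sd_mul sd_inv sd_a sd_b sd_sigma.
Lemma sd_mul_E g p m k p' m' k' : sd_mul ((p, m, k) : SD g) (p', m', k') =
  (p + p' - 2 * \sum_(i < g) k i * m' i, [ffun i => m i + m' i], [ffun i => k i + k' i]).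
Proof. by []. Qed.

Arguments sd_mul : simpl never.
Arguments sd_inv : simpl never.
Arguments sd_a : simpl never.
Arguments sd_b : simpl never.
Arguments sd_sigma : simpl never.
Arguments sd_one : simpl never.
Opaque sd_mul sd_inv sd_a sd_b sd_sigma.

Lemma blk0 n g (X : 'I_g -> gen n g) m s : (forall i, m i = 0) -> blk X m s = [::].
Proof. by move=> h; elim: s => [|i s IH] //; rewrite blk_cons IH h cats0. Qed.

Lemma nf_eval n g (s0 s1 : 'I_n.-1) (h0 : (s0 : nat) = 0%N) (h1 : (s1 : nat) = 1%N)
  (w : word n g) : w =w nf s0 (sd_eval w).
Proof.
elim: w => [|l w IH].
- rewrite /= !blk0 // => i; by rewrite ffunE.
- change (l :: w) with ([:: l] ++ w) at 1; rewrite {1}IH (nf_step h0 h1); by [].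
Qed.

Lemma ev_pwS n g (s0 : 'I_n.-1) z :
  sd_eval (pw (Sig g s0) z) = (z, [ffun => 0], [ffun => 0]).
Proof.
elim/int_ind2: z => [|z IH|z IH] //.
- rewrite (sd_weq (pw_succ _ z)) /= ev_S IH /= addrC //.
- rewrite (sd_weq (pw_pred _ z)) /= ev_Si IH //.
Qed.

Lemma ev_pwA n g (i : 'I_g) z :
  sd_eval (pw (A n i) z) = (0, [ffun l => z * Posz (l == i : nat)], [ffun => 0]).
Proof.
elim/int_ind2: z => [|z IH|z IH].
- by apply: sd_ext => // l; rewrite !ffunE mul0r.
- rewrite (sd_weq (pw_succ _ z)) /= ev_A IH /=; apply: sd_ext => // l; rewrite !ffunE; ring.
- rewrite (sd_weq (pw_pred _ z)) /= ev_Ai IH /=; apply: sd_ext => // l; rewrite !ffunE; ring.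
Qed.

Lemma ev_pwB n g (i : 'I_g) z :
  sd_eval (pw (B n i) z) = (0, [ffun => 0], [ffun l => z * Posz (l == i : nat)]).
Proof.
elim/int_ind2: z => [|z IH|z IH].
- by apply: sd_ext => // l; rewrite !ffunE mul0r.
- rewrite (sd_weq (pw_succ _ z)) /= ev_B IH /=; apply: sd_ext => [|l|l]; rewrite !ffunE; ring.
- rewrite (sd_weq (pw_pred _ z)) /= ev_Bi IH /=; apply: sd_ext => [|l|l]; rewrite !ffunE; ring.
Qed.

Lemma ev_blkA n g (m : 'I_g -> int) s :
  sd_eval (blk (@A n g) m s) = (0, [ffun l => \sum_(i <- s) m i * Posz (l == i : nat)], [ffun => 0]).
Proof.
elim: s => [|i s IH].
- by apply: sd_ext => // l; rewrite !ffunE big_nil.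
- rewrite blk_cons sd_eval_cat ev_pwA IH sd_mul_E; apply: sd_ext => [|l|l]; rewrite ?ffunE ?big_cons //.
  by rewrite big1 ?mulr0 ?subr0 ?addr0 // => l _; rewrite ffunE mul0r.
Qed.

Lemma ev_blkB n g (k : 'I_g -> int) s :
  sd_eval (blk (@B n g) k s) = (0, [ffun => 0], [ffun l => \sum_(i <- s) k i * Posz (l == i : nat)]).
Proof.
elim: s => [|i s IH].
- by apply: sd_ext => // l; rewrite !ffunE big_nil.
- rewrite blk_cons sd_eval_cat ev_pwB IH sd_mul_E; apply: sd_ext => [|l|l]; rewrite ?ffunE ?big_cons ?addr0 //.
  by rewrite big1 ?mulr0 ?subr0 // => l _; rewrite !ffunE mulr0.
Qed.

Lemma sum_ind2 g (j : 'I_g) (f : 'I_g -> int) :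
  \sum_(i <- index_enum 'I_g) f i * Posz (j == i : nat) = f j.
Proof.
rewrite -(sum_ind' j f); apply: eq_bigr => i _; by rewrite mulrC eq_sym.
Qed.

Lemma eval_nf n g (s0 : 'I_n.-1) (h : SD g) : sd_eval (nf s0 h) = h.
Proof.
case: h => [[p m] k]; rewrite /nf !sd_eval_cat ev_pwS ev_blkA ev_blkB !sd_mul_E.
apply: sd_ext => [|i|i]; rewrite ?ffunE ?sum_ind2.
- rewrite !big1 ?mulr0 ?subr0 ?addr0 // => i _; by rewrite !ffunE mul0r.
- by rewrite add0r addr0.
- by rewrite add0r add0r.
Qed.

Local Close Scope ring_scope.
Unset Implicit Arguments.

Theorem mainTheorem3 (g n : nat) (hg : (1 <= g)%N) (hn : (3 <= n)%N) :
  (* SD g with sd_mul / sd_one / sd_inv is a group *)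
  (forall x y z : SD g, sd_mul x (sd_mul y z) = sd_mul (sd_mul x y) z) /\
      (forall x : SD g, sd_mul (sd_one g) x = x) /\
      (forall x : SD g, sd_mul (sd_inv x) x = sd_one g) /\
  [/\
  (* all sigma_i have the same class in B_n(Sigma_g)/Gamma_3 *)
      (forall i j : 'I_n.-1, weq [:: pos (Sig g i)] [:: pos (Sig g j)]),
  (* evaluation word -> SD g induces an isomorphism
     B_n(Sigma_g)/Gamma_3 ~= SD g, sigma_i |-> sigma, a_i |-> a_i, b_i |-> b_i *)
      (forall u v : word n g, weq u v <-> sd_eval u = sd_eval v)
    & (forall h : SD g, exists w : word n g, sd_eval w = h)].
Proof.
have h0' : (0 < n.-1)%N by move: hn; case: n => [|[|[|n]]].
have h1' : (1 < n.-1)%N by clear h0'; move: hn; case: n => [|[|[|n]]].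
pose s0 : 'I_n.-1 := Ordinal h0'. pose s1 : 'I_n.-1 := Ordinal h1'.
have e0 : (s0 : nat) = 0%N by [].
have e1 : (s1 : nat) = 1%N by [].
split; [exact: sd_mul_assoc|]; split; [exact: sd_mul1|]; split; [exact: sd_mulV|].
split.
- move=> i j; rewrite (sig_all e0 i) (sig_all e0 j) //.
- move=> u v; split; first exact: sd_weq.
  move=> e; rewrite (nf_eval e0 e1 u) (nf_eval e0 e1 v) e //.
- move=> h; exists (nf s0 h); exact: eval_nf.
Qed.
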